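(* Let $q,u$ be positive integers, let $B\in\Gamma^u_u$ be a unimodular binarization polytope and let $C\in\Gamma^q_u$. Then there exists an integral affine transformation $h:\mathbb{R}^{1+u}\to\mathbb{R}^{1+q}$ with $h(B)\subseteq C$.
   Context: For positive integers $q,u$, $\Gamma^q_u$ is the set of rational polytopes $B\subseteq\{(x,z)\in\mathbb{R}\times[0,1]^q:0\le x\le u\}$ with $\operatorname{proj}_x(B\cap(\mathbb{R}\times\{0,1\}^q))=\{0,1,\dots,u\}$. $B$ is perfect if for each $x\in\{0,\dots,u\}$ there is a unique $z\in\{0,1\}^q$ with $(x,z)\in B$, and $B=\mathrm{conv}(B\cap(\mathbb{R}\times\{0,1\}^q))$. A perfect $B\in\Gamma^u_u$, written $B=\mathrm{conv}\{(j,w^j):j=0,\dots,u\}$ with $w^j\in\{0,1\}^u$, is unimodular if the $u\times u$ matrix with columns $w^j-w^0$ ($j=1,\dots,u$) is integral with determinant $\pm1$. An integral affine transformation $\mathbb{R}^a\to\mathbb{R}^b$ is a map $y\mapsto Vy+v$ with $V$ an integral $b\times a$ matrix and $v\in\mathbb{Z}^b$. *)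

(* Defs.v *)
From mathcomp Require Import all_boot all_order all_algebra.
From mathcomp Require Import boolp classical_sets reals.
Set Implicit Arguments. Unset Strict Implicit. Unset Printing Implicit Defensive.
Import Order.TTheory GRing.Theory Num.Theory.
Local Open Scope ring_scope.
Local Open Scope classical_set_scope.

(* A point (x, z) of R x R^q is encoded as the row vector [x | z] : 'rV_(1+q). *)
Definition mkpt (R : realType) (q : nat) (x : R) (z : 'rV[R]_q) : 'rV[R]_(1 + q) :=
  row_mx (x%:M) z.
Definition xc (R : realType) (q : nat) (p : 'rV[R]_(1 + q)) : R := lsubmx p 0 0.
Definition zc (R : realType) (q : nat) (p : 'rV[R]_(1 + q)) : 'rV[R]_q := rsubmx p.

Definition is_rat (R : realType) (r : R) : Prop := exists a : rat, r = ratr a.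
Definition is_intR (R : realType) (r : R) : Prop := exists a : int, r = a%:~R.

Definition binary (R : realType) (q : nat) (z : 'rV[R]_q) : Prop :=
  forall i, z 0 i = 0 \/ z 0 i = 1.

Definition conv (R : realType) (n : nat) (S : set 'rV[R]_n) : set 'rV[R]_n :=
  [set p | exists (k : nat) (pts : 'I_k -> 'rV[R]_n) (l : 'I_k -> R),
      (forall i, S (pts i)) /\ (forall i, 0 <= l i) /\ \sum_(i < k) l i = 1 /\
      p = \sum_(i < k) l i *: pts i].

Definition rat_polytope (R : realType) (n : nat) (B : set 'rV[R]_n) : Prop :=
  exists (k : nat) (v : 'I_k -> 'rV[R]_n),
    (forall i j, is_rat (v i 0 j)) /\ B = conv (range v).

Definition binpts (R : realType) (q : nat) : set 'rV[R]_(1 + q) :=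
  [set p | binary (zc p)].

Definition Gamma (R : realType) (q u : nat) (B : set 'rV[R]_(1 + q)) : Prop :=
  rat_polytope B /\
  (forall p, B p -> (0 <= xc p <= u%:R) /\ (forall i, 0 <= zc p 0 i <= 1)) /\
  (forall x : R, (exists p, B p /\ binary (zc p) /\ xc p = x) <->
                 (exists j : nat, (j <= u)%N /\ x = j%:R)).

Definition perfect (R : realType) (q u : nat) (B : set 'rV[R]_(1 + q)) : Prop :=
  (forall j : nat, (j <= u)%N -> exists! z : 'rV[R]_q, binary z /\ B (mkpt j%:R z)) /\
  B = conv (B `&` @binpts R q).

Definition unimodular (R : realType) (u : nat) (B : set 'rV[R]_(1 + u)) : Prop :=
  @Gamma R u u B /\ @perfect R u u B /\
  exists w : 'I_u.+1 -> 'rV[R]_u,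
    (forall j : 'I_u.+1, binary (w j) /\ B (mkpt (j : nat)%:R (w j))) /\
    B = conv (fun p => exists j : 'I_u.+1, p = mkpt (j : nat)%:R (w j)) /\
    (forall i j, is_intR ((\matrix_(a < u, b < u) (w (lift ord0 b) 0 a - w ord0 0 a)) i j)) /\
    (\det (\matrix_(a < u, b < u) (w (lift ord0 b) 0 a - w ord0 0 a)) = 1 \/
     \det (\matrix_(a < u, b < u) (w (lift ord0 b) 0 a - w ord0 0 a)) = -1).

(* Main.v *)
Require Import Defs.
From mathcomp Require Import all_boot all_order all_algebra.
From mathcomp Require Import boolp classical_sets reals.
Import Order.TTheory GRing.Theory Num.Theory.
Local Open Scope ring_scope.
Local Open Scope classical_set_scope.

Section IntR.
Variable R : realType.
Lemma isi0 : is_intR (0 : R). Proof. by exists 0; rewrite mulr0z. Qed.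
Lemma isi1 : is_intR (1 : R). Proof. by exists 1. Qed.
Lemma isiD (a b : R) : is_intR a -> is_intR b -> is_intR (a + b).
Proof. by move=> [x ->] [y ->]; exists (x + y); rewrite intrD. Qed.
Lemma isiN (a : R) : is_intR a -> is_intR (- a).
Proof. by move=> [x ->]; exists (- x); rewrite mulrNz. Qed.
Lemma isiM (a b : R) : is_intR a -> is_intR b -> is_intR (a * b).
Proof. by move=> [x ->] [y ->]; exists (x * y); rewrite intrM. Qed.
Lemma isiB (a b : R) : is_intR a -> is_intR b -> is_intR (a - b).
Proof. by move=> ha hb; apply: isiD => //; apply: isiN. Qed.
Lemma isi_sum (I : Type) (r : seq I) (P : pred I) (F : I -> R) :
  (forall i, P i -> is_intR (F i)) -> is_intR (\sum_(i <- r | P i) F i).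
Proof. by move=> h; apply: (big_ind (fun x => is_intR x)) => //; [apply: isi0|apply: isiD]. Qed.
Lemma isi_prod (I : Type) (r : seq I) (P : pred I) (F : I -> R) :
  (forall i, P i -> is_intR (F i)) -> is_intR (\prod_(i <- r | P i) F i).
Proof. by move=> h; apply: (big_ind (fun x => is_intR x)) => //; [apply: isi1|apply: isiM]. Qed.
Lemma isiX (a : R) n : is_intR a -> is_intR (a ^+ n).
Proof. by move=> h; elim: n => [|n IH]; [apply: isi1| rewrite exprS; apply: isiM]. Qed.
Lemma isi_det n (A : 'M[R]_n) : (forall i j, is_intR (A i j)) -> is_intR (\det A).
Proof.
move=> h; rewrite /determinant; apply: isi_sum => s _; apply: isiM.
  by apply: isiX; apply: isiN; apply: isi1.
by apply: isi_prod.
Qed.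
Lemma isi_adj n (A : 'M[R]_n) : (forall i j, is_intR (A i j)) -> forall i j, is_intR (\adj A i j).
Proof.
move=> h i j; rewrite mxE; unfold cofactor; apply: isiM.
  by apply: isiX; apply: isiN; apply: isi1.
by apply: isi_det => a b; rewrite !mxE; apply: h.
Qed.
Lemma isi_inv n (A : 'M[R]_n) : (forall i j, is_intR (A i j)) ->
  (\det A = 1 \/ \det A = -1) -> A \in unitmx /\ forall i j, is_intR (invmx A i j).
Proof.
move=> h hd.
have hu : A \in unitmx.
  by rewrite unitmxE unitfE; case: hd => ->; rewrite ?oppr_eq0 oner_eq0.
split=> // i j; rewrite /invmx hu mxE.
apply: isiM; last by apply: isi_adj.
by case: hd => ->; rewrite ?invrN invr1; [apply: isi1 | apply: isiN; apply: isi1].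
Qed.
Lemma isi_mul m n p (A : 'M[R]_(m, n)) (B : 'M[R]_(n, p)) :
  (forall i j, is_intR (A i j)) -> (forall i j, is_intR (B i j)) ->
  forall i j, is_intR ((A *m B) i j).
Proof. by move=> hA hB i j; rewrite mxE; apply: isi_sum => k _; apply: isiM. Qed.
End IntR.

Section Conv.
Variable R : realType.
Variables (n K : nat) (vv : 'I_K -> 'rV[R]_n).

Lemma conv_range p : conv (range vv) p ->
  exists mu : 'I_K -> R, (forall t, 0 <= mu t) /\ \sum_t mu t = 1 /\
    p = \sum_t mu t *: vv t.
Proof.
move=> [k [pts [l [hp [hl [hs ->]]]]]].
have [tt htt] : {tt : 'I_k -> 'I_K & forall s, vv (tt s) = pts s}.
  by apply: (@choice _ _ (fun s t => vv t = pts s)) => s; case: (hp s) => t _ e; exists t.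
exists (fun t => \sum_(s | tt s == t) l s); split.
  by move=> t; apply: sumr_ge0 => s _.
split.
  by rewrite -hs (partition_big tt xpredT) //.
rewrite (partition_big tt xpredT) //=; apply: eq_bigr => t _.
rewrite scaler_suml; apply: eq_bigr => s /eqP <-.
by rewrite htt.
Qed.

Lemma conv_range_comb k (c : 'I_k -> 'rV[R]_n) (l : 'I_k -> R) :
  (forall i, conv (range vv) (c i)) -> (forall i, 0 <= l i) -> \sum_i l i = 1 ->
  conv (range vv) (\sum_i l i *: c i).
Proof.
move=> hc hl hs.
have [mu hmu] : {mu : 'I_k -> 'I_K -> R & forall i, (forall t, 0 <= mu i t) /\
     \sum_t mu i t = 1 /\ c i = \sum_t mu i t *: vv t}.
  apply: (@choice _ _ (fun i (m : 'I_K -> R) => (forall t, 0 <= m t) /\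
     \sum_t m t = 1 /\ c i = \sum_t m t *: vv t)) => i; apply: conv_range; exact: hc.
exists K, vv, (fun t => \sum_i l i * mu i t); split; first by move=> t; exists t.
split; first by move=> t; apply: sumr_ge0 => i _; apply: mulr_ge0 => //; case: (hmu i).
split.
  rewrite exchange_big /= -hs; apply: eq_bigr => i _.
  by rewrite -mulr_sumr; case: (hmu i) => _ [-> _]; rewrite mulr1.
transitivity (\sum_i \sum_t (l i * mu i t) *: vv t).
  apply: eq_bigr => i _; case: (hmu i) => _ [_ ->].
  by rewrite scaler_sumr; apply: eq_bigr => t _; rewrite scalerA.
rewrite exchange_big /=; apply: eq_bigr => t _.
by rewrite scaler_suml.
Qed.
End Conv.

Section More.
Variable R : realType.
Lemma isi_nat n : is_intR (n%:R : R). Proof. by exists n%:Z; rewrite pmulrn. Qed.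
Lemma isi_bin q (z : 'rV[R]_q) : binary z -> forall j, is_intR (z 0 j).
Proof. by move=> h j; case: (h j) => ->; [apply: isi0|apply: isi1]. Qed.
Lemma isi_row m n1 n2 (A : 'M[R]_(m, n1)) (B : 'M[R]_(m, n2)) :
  (forall i j, is_intR (A i j)) -> (forall i j, is_intR (B i j)) ->
  forall i j, is_intR (row_mx A B i j).
Proof. by move=> hA hB i j; rewrite -[j]splitK; case: (split j) => k /=; rewrite ?row_mxEl ?row_mxEr. Qed.
Lemma isi_col m1 m2 n (A : 'M[R]_(m1, n)) (B : 'M[R]_(m2, n)) :
  (forall i j, is_intR (A i j)) -> (forall i j, is_intR (B i j)) ->
  forall i j, is_intR (col_mx A B i j).
Proof. by move=> hA hB i j; rewrite -[i]splitK; case: (split i) => k /=; rewrite ?col_mxEu ?col_mxEd. Qed.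
Lemma isi_zero m n i j : is_intR ((0 : 'M[R]_(m, n)) i j).
Proof. by rewrite mxE; apply: isi0. Qed.
Lemma isi_one n i j : is_intR ((1%:M : 'M[R]_n) i j).
Proof. by rewrite mxE; apply: isi_nat. Qed.
Lemma isi_addm m n (A B : 'M[R]_(m, n)) :
  (forall i j, is_intR (A i j)) -> (forall i j, is_intR (B i j)) ->
  forall i j, is_intR ((A + B) i j).
Proof. by move=> hA hB i j; rewrite mxE; apply: isiD. Qed.
Lemma isi_oppm m n (A : 'M[R]_(m, n)) :
  (forall i j, is_intR (A i j)) -> forall i j, is_intR ((- A) i j).
Proof. by move=> hA i j; rewrite mxE; apply: isiN. Qed.
Lemma mkpt_eta q (p : 'rV[R]_(1 + q)) : p = mkpt (xc p) (zc p).
Proof. by rewrite /mkpt /xc /zc -mx11_scalar hsubmxK. Qed.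
End More.

Theorem lemma1 (R : realType) (q u : nat) (hq : (0 < q)%N) (hu : (0 < u)%N)
    (B : set 'rV[R]_(1 + u)) (C : set 'rV[R]_(1 + q)) :
  @unimodular R u B -> @Gamma R q u C ->
  exists (V : 'M[R]_(1 + u, 1 + q)) (v : 'rV[R]_(1 + q)),
    (forall i j, is_intR (V i j)) /\ (forall j, is_intR (v 0 j)) /\
    (forall p, B p -> C (p *m V + v)).
Proof.
move=> [_ [_ [w [hw [hBc [hWi hWd]]]]]] [[kC [vC [_ hCc]]] [_ hCbin]].
have [z hz] : {z : 'I_u.+1 -> 'rV[R]_q & forall j, binary (z j) /\ C (mkpt (j : nat)%:R (z j))}.
  apply: (@choice _ _ (fun (j : 'I_u.+1) (zz : 'rV[R]_q) => binary zz /\ C (mkpt (j : nat)%:R zz))) => j.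
  have [p [Cp [bp xp]]] : exists p, C p /\ binary (zc p) /\ xc p = (j : nat)%:R.
    by apply/hCbin; exists (j : nat); split => //; rewrite -ltnS.
  by exists (zc p); split => //; rewrite -xp -mkpt_eta.
set Wm := \matrix_(a < u, b < u) (w (lift ord0 b) 0 a - w ord0 0 a) in hWi hWd.
pose Wr := \matrix_(b < u, a < u) (w (lift ord0 b) 0 a - w ord0 0 a).
pose Zr := \matrix_(b < u, a < q) (z (lift ord0 b) 0 a - z ord0 0 a).
have eWr : Wr^T = Wm by apply/matrixP => i j; rewrite !mxE.
have [Wu Winv] : Wr \in unitmx /\ forall i j, is_intR (invmx Wr i j).
  apply: isi_inv; last by rewrite -det_tr eWr.
  by move=> i j; have := hWi j i; rewrite !mxE.
pose M := invmx Wr *m Zr.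
have Mi : forall i j, is_intR (M i j).
  apply: isi_mul => // i j; rewrite mxE; apply: isiB; apply: isi_bin; exact: proj1 (hz _).
have key : forall j, (w j - w ord0) *m M = z j - z ord0.
  move=> j; case: (unliftP ord0 j) => [b ->|->]; last by rewrite !subrr mul0mx.
  have e1 : w (lift ord0 b) - w ord0 = row b Wr by apply/rowP => a; rewrite !mxE.
  have e2 : z (lift ord0 b) - z ord0 = row b Zr by apply/rowP => a; rewrite !mxE.
  by rewrite e1 e2 -row_mul /M mulKVmx.
pose V : 'M[R]_(1 + u, 1 + q) := block_mx 1%:M 0 0 M.
pose v : 'rV[R]_(1 + q) := row_mx 0 (z ord0 - w ord0 *m M).
have hpt : forall j : 'I_u.+1, mkpt (j : nat)%:R (w j) *m V + v = mkpt (j : nat)%:R (z j).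
  move=> j; rewrite /mkpt /V /v mul_row_block add_row_mx.
  rewrite !mulmx0 mulmx1 ?mul0mx !addr0 ?add0r; congr row_mx.
  by rewrite addrCA -mulmxBl key addrC subrK.
exists V, v; split.
  rewrite /V block_mxEv; apply: isi_col; apply: isi_row;
    try (by apply: isi_zero); try (by apply: isi_one); exact: Mi.
split.
  move=> j; apply: isi_row; first by apply: isi_zero.
  apply: isi_addm.
    by move=> i j'; rewrite [i]ord1; exact: isi_bin (proj1 (hz ord0)) j'.
  apply: isi_oppm; apply: isi_mul => //.
  by move=> i j'; rewrite [i]ord1; exact: isi_bin (proj1 (hw ord0)) j'.
move=> p; rewrite hBc => -[k [pts [l [hp [hl [hs ->]]]]]].
have -> : (\sum_(i < k) l i *: pts i) *m V + v = \sum_(i < k) l i *: (pts i *m V + v).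
  rewrite mulmx_suml.
  under [RHS]eq_bigr do rewrite scalerDr.
  rewrite big_split /= -scaler_suml hs scale1r; congr (_ + _).
  by apply: eq_bigr => i _; rewrite scalemxAl.
rewrite hCc; apply: conv_range_comb => // i.
have [j ->] := hp i.
by rewrite hpt -hCc; case: (hz j).
Qed.
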